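(* Let $(n^{-*},n^{+*})$ be a global optimum of $\max\{\Phi(n^-,n^+): n^-,n^+\in\mathbb{N}\cup\{0\},\ n^-+n^+=N\}$ and suppose the optimal value $\Phi^*=\Phi(n^{-*},n^{+*})$ is positive. Then for every global optimum $(w^{-*},w^{+*})$ of problem $P(n^{-*},n^{+*})$ we have $w^{-*}_i\ne 0$ for all $i\in\{1,\dots,n^{-*}\}$ and $w^{+*}_j\ne 0$ for all $j\in\{1,\dots,n^{+*}\}$.
   Context: Lottery with $N\in\mathbb{N}$ tickets, each outcome having probability $1/N$. Parameters $\alpha,\beta\in(0,1)$, $\lambda>0$; value function $U(x)=x^\alpha$ for $x\ge0$ and $U(x)=-\lambda(-x)^\beta$ for $x<0$. A function $f:[0,1]\to\mathbb{R}$ is inverse S-shaped if it is strictly increasing, continuously differentiable, and there is $x_0\in[0,1]$ such that $f'$ is strictly decreasing on $[0,x_0]$ and strictly increasing on $[x_0,1]$; $W^+,W^-:[0,1]\to[0,1]$ are inverse S-shaped with value $0$ at $0$ and $1$ at $1$. For $n^-+n^+=N$, set $h^-_i=W^-(i/N)-W^-((i-1)/N)$ ($i\le n^-$) and $h^+_j=W^+((n^+-j+1)/N)-W^+((n^+-j)/N)$ ($j\le n^+$). Problem $P(n^-,n^+)$: maximize $\sum_{i=1}^{n^-}(-w^-_i)-\sum_{j=1}^{n^+}w^+_j$ over $w^-\in\mathbb{R}^{n^-}$, $w^+\in\mathbb{R}^{n^+}$ subject to $\sum_{i=1}^{n^-}h^-_iU(w^-_i)+\sum_{j=1}^{n^+}h^+_jU(w^+_j)\ge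 0$, $0\le w^+_1\le\cdots\le w^+_{n^+}$, and $w^-_1\le\cdots\le w^-_{n^-}\le 0$. $\Phi(n^-,n^+)$ denotes its optimal value (with $\Phi(0,N)=\Phi(N,0)=0$). *)

(* Defs.v *)
From HB Require Import structures.
From mathcomp Require Import all_boot all_order all_algebra.
From mathcomp Require Import all_classical all_reals all_analysis.
Set Implicit Arguments. Unset Strict Implicit. Unset Printing Implicit Defensive.
Import Order.TTheory GRing.Theory Num.Theory.
Import numFieldNormedType.Exports.
Local Open Scope classical_set_scope.
Local Open Scope ring_scope.

Section Lottery.
Variable R : realType.

Definition Uval (alpha beta lam : R) (x : R) : R :=
  if 0 <= x then x `^ alpha else - lam * ((- x) `^ beta).

(* inverse S-shaped on [0,1] (f is given on R; only its behaviour at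
   points of [0,1] matters) *)
Definition inverse_S_shaped (f : R -> R) : Prop :=
  (forall x y, 0 <= x -> x < y -> y <= 1 -> f x < f y) /\
  (forall x, 0 <= x <= 1 -> derivable f x 1) /\
  {within [set x | 0 <= x <= 1], continuous (derive1 f)} /\
  exists x0, 0 <= x0 <= 1 /\
    (forall x y, 0 <= x -> x < y -> y <= x0 -> derive1 f y < derive1 f x) /\
    (forall x y, x0 <= x -> x < y -> y <= 1 -> derive1 f x < derive1 f y).

Definition prob_weight (W : R -> R) : Prop :=
  inverse_S_shaped W /\ W 0 = 0 /\ W 1 = 1.

(* decision weights, 1-based indices *)
Definition hm (N : nat) (Wm : R -> R) (i : nat) : R :=
  Wm (i%:R / N%:R) - Wm (i.-1%:R / N%:R).
Definition hp (N : nat) (Wp : R -> R) (np j : nat) : R :=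
  Wp ((np - j).+1%:R / N%:R) - Wp ((np - j)%:R / N%:R).

Definition objP (nm np : nat) (wm wp : nat -> R) : R :=
  \sum_(1 <= i < nm.+1) (- wm i) - \sum_(1 <= j < np.+1) wp j.

Definition feasibleP (N : nat) (alpha beta lam : R) (Wm Wp : R -> R)
    (nm np : nat) (wm wp : nat -> R) : Prop :=
  [/\ 0 <= \sum_(1 <= i < nm.+1) hm N Wm i * Uval alpha beta lam (wm i)
          + \sum_(1 <= j < np.+1) hp N Wp np j * Uval alpha beta lam (wp j),
      ((0 < np)%N -> 0 <= wp 1%N),
      (forall j, (1 <= j < np)%N -> wp j <= wp j.+1),
      (forall i, (1 <= i < nm)%N -> wm i <= wm i.+1) &
      ((0 < nm)%N -> wm nm <= 0)].

Definition globalOptP N alpha beta lam Wm Wp nm np (wm wp : nat -> R) : Prop :=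
  feasibleP N alpha beta lam Wm Wp nm np wm wp /\
  forall vm vp, feasibleP N alpha beta lam Wm Wp nm np vm vp ->
    objP nm np vm vp <= objP nm np wm wp.

(* v is the optimal value Phi(nm, np) (supremum of the objective over the
   feasible set), with the convention Phi(0,N) = Phi(N,0) = 0 *)
Definition PhiIs N alpha beta lam Wm Wp (nm np : nat) (v : R) : Prop :=
  if (nm == 0)%N || (np == 0)%N then v = 0 else
  (forall wm wp, feasibleP N alpha beta lam Wm Wp nm np wm wp ->
     objP nm np wm wp <= v) /\
  (forall u, (forall wm wp, feasibleP N alpha beta lam Wm Wp nm np wm wp ->
     objP nm np wm wp <= u) -> v <= u).

(* Phi(nm, np) <= v  (Phi may be +infinity, in which case this fails) *)
Definition PhiLe N alpha beta lam Wm Wp (nm np : nat) (v : R) : Prop :=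
  if (nm == 0)%N || (np == 0)%N then is_true (0 <= v) else
  forall wm wp, feasibleP N alpha beta lam Wm Wp nm np wm wp ->
     objP nm np wm wp <= v.

End Lottery.

(* Main.v *)
Require Import Defs.
From HB Require Import structures.
From mathcomp Require Import all_boot all_order all_algebra.
From mathcomp Require Import all_classical all_reals all_analysis.
From mathcomp Require Import ring lra zify.
Import Order.TTheory GRing.Theory Num.Theory.
Local Open Scope ring_scope.
Section Aux.
Variable R : realType.
Variables (alpha beta lam : R).
Hypothesis ha : 0 < alpha < 1.
Hypothesis hb : 0 < beta < 1.
Hypothesis hl : 0 < lam.

Lemma U0 : Uval alpha beta lam 0 = 0.
Proof. by rewrite /Uval lexx powR0 // gt_eqF //; case/andP: ha. Qed.

Lemma Upos x : 0 <= x -> Uval alpha beta lam x = x `^ alpha.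
Proof. by move=> hx; rewrite /Uval hx. Qed.

Lemma Uneg x : x < 0 -> Uval alpha beta lam x = - lam * ((- x) `^ beta).
Proof. by move=> hx; rewrite /Uval leNgt hx. Qed.

Lemma Umono x y : 0 <= x -> x <= y -> Uval alpha beta lam x <= Uval alpha beta lam y.
Proof.
move=> hx hxy; rewrite !Upos //; last exact: le_trans hxy.
have a0 : 0 <= alpha by case/andP: ha => /ltW.
apply: (ge0_ler_powR a0) => //; rewrite nnegrE //.
exact: le_trans hxy.
Qed.

Lemma W_inc (W : R -> R) (N k : nat) : prob_weight W -> (k.+1 <= N)%N ->
  0 < W (k.+1%:R / N%:R) - W (k%:R / N%:R).
Proof.
move=> [[Wi _] _] hk.
have N0 : (0 < N%:R :> R) by rewrite ltr0n; apply: leq_ltn_trans hk.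
rewrite subr_gt0; apply: Wi.
- by rewrite divr_ge0.
- by rewrite ltr_pM2r ?invr_gt0 // ltr_nat.
- by rewrite ler_pdivrMr // mul1r ler_nat.
Qed.

Lemma chain (v : nat -> R) n : (forall i, (1 <= i < n)%N -> v i <= v i.+1) ->
  forall i k, (1 <= i)%N -> (i <= k)%N -> (k <= n)%N -> v i <= v k.
Proof.
move=> hv i k h1; elim: k => [|k IH].
  by rewrite leqn0 => /eqP ->.
rewrite leq_eqVlt => /orP [/eqP <- //|hik] hkn.
apply: le_trans (IH hik (ltnW hkn)) _; apply: hv.
by rewrite hkn (leq_trans h1 hik).
Qed.

End Aux.
Section Shift.
Variable R : realType.
Variables (alpha beta lam : R).
Hypothesis ha : 0 < alpha < 1.
Hypothesis hb : 0 < beta < 1.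
Hypothesis hl : 0 < lam.

Lemma shift_feas N (Wm Wp : R -> R) a b (vm vp : nat -> R) :
  feasibleP N alpha beta lam Wm Wp a.+1 b vm vp -> vm a.+1 = 0 ->
  let vp' := fun j => if j == 1%N then 0 else vp j.-1 in
  feasibleP N alpha beta lam Wm Wp a b.+1 vm vp' /\
  objP a b.+1 vm vp' = objP a.+1 b vm vp.
Proof.
move=> [hs hp1 hpm hmm hm0] ha0 vp'.
have Esm : \sum_(1 <= i < a.+2) hm N Wm i * Uval alpha beta lam (vm i)
   = \sum_(1 <= i < a.+1) hm N Wm i * Uval alpha beta lam (vm i).
  by rewrite big_nat_recr //= ha0 U0 // mulr0 addr0.
have Esp : \sum_(1 <= j < b.+2) hp N Wp b.+1 j * Uval alpha beta lam (vp' j)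
   = \sum_(1 <= j < b.+1) hp N Wp b j * Uval alpha beta lam (vp j).
  rewrite big_ltn // {1}/vp' eqxx U0 // mulr0 add0r big_add1 /=.
  apply: eq_big_nat => j /andP [j1 _].
  by rewrite /vp' /= /hp subSS; case: j j1.
have Eo1 : \sum_(1 <= i < a.+2) (- vm i) = \sum_(1 <= i < a.+1) (- vm i).
  by rewrite big_nat_recr //= ha0 oppr0 addr0.
have Eo2 : \sum_(1 <= j < b.+2) vp' j = \sum_(1 <= j < b.+1) vp j.
  rewrite big_ltn // {1}/vp' eqxx add0r big_add1 /=.
  by apply: eq_big_nat => j /andP [j1 _]; rewrite /vp'; case: j j1.
split; last by rewrite /objP Eo1 Eo2.
split.
- by rewrite Esp -Esm.
- by rewrite /vp' eqxx.
- move=> j /andP [j1 jb]; rewrite /vp' /=.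
  case: j j1 jb => // [[|j]] _ jb /=.
    by apply: hp1.
  by apply: hpm; rewrite ltnS in jb; rewrite jb.
- by move=> i /andP [i1 ia]; apply: hmm; rewrite i1 ltnW.
- move=> a0; apply: le_trans (hmm a _) _; first by rewrite a0 ltnSn.
  by rewrite ha0.
Qed.
End Shift.
Section Improve.
Variable R : realType.
Variables (alpha beta lam : R).
Hypothesis ha : 0 < alpha < 1.
Hypothesis hb : 0 < beta < 1.
Hypothesis hl : 0 < lam.

Lemma improve N (Wm Wp : R -> R) a b (vm vp : nat -> R) :
  prob_weight Wm -> prob_weight Wp -> (0 < a)%N -> (0 < b)%N -> (a + b)%N = N ->
  feasibleP N alpha beta lam Wm Wp a b vm vp -> vp 1%N = 0 -> vm 1%N < 0 ->
  exists vm' vp', feasibleP N alpha beta lam Wm Wp a b vm' vp' /\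
    objP a b vm vp < objP a b vm' vp'.
Proof.
move=> pWm pWp a0 b0 eN [hs hp1 hpm hmm hm0] vp10 vm1.
have hbN : (b <= N)%N by rewrite -eN leq_addl.
have haN : (1 <= N)%N by rewrite -eN (leq_trans a0) // leq_addr.
set A := - vm 1%N.
have A0 : 0 < A by rewrite /A oppr_gt0.
set h1 := hp N Wp b 1.
have h10 : 0 < h1.
  rewrite /h1 /hp; have := @W_inc R Wp N (b - 1) pWp.
  by rewrite subn1 prednK //; apply.
have hpj : forall j, (1 <= j <= b)%N -> 0 <= hp N Wp b j.
  move=> j /andP [j1 jb]; rewrite /hp; apply: ltW; apply: W_inc => //.
  apply: leq_trans hbN; lia.
set hm1 := hm N Wm 1.
have hm10 : 0 < hm1 by rewrite /hm1 /hm; apply: W_inc.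
set X := A `^ beta.
have X0 : 0 <= X by apply: powR_ge0.
set C := hm1 * lam * (X / A) + 1.
have C0 : 0 < C.
  have : 0 <= hm1 * lam * (X / A).
    by apply: mulr_ge0; [apply: mulr_ge0; apply: ltW | apply: divr_ge0 => //; apply: ltW].
  rewrite /C; lra.
set M := C * b%:R / h1 + 1.
have M0 : 0 < M.
  have : 0 <= C * b%:R / h1.
    by apply: divr_ge0; [apply: mulr_ge0 => //; apply: ltW | apply: ltW].
  rewrite /M; lra.
have al1 : alpha - 1 != 0 by case/andP: ha => _ h; rewrite subr_eq0 lt_eqF.
set e := M `^ (alpha - 1)^-1.
have e0 : 0 < e by apply: powR_gt0.
have he : e `^ alpha = e * M.
  have -> : alpha = 1 + (alpha - 1) by rewrite addrC subrK.
  rewrite powRD; last by apply/implyP => _; rewrite gt_eqF.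
  rewrite powRr1; last exact: ltW.
  by rewrite /e -powRrM mulVf // powRr1 //; apply: ltW.
set d := h1 * (e * M) / C.
have d0 : 0 < d by rewrite /d divr_gt0 // mulr_gt0 // mulr_gt0.
have hd : d - b%:R * e = e * h1 / C.
  rewrite /d /M; field; apply/andP; split; apply: lt0r_neq0 => //.
have hY : (A + d) `^ beta <= X + X / A * d.
  have -> : A + d = A * (1 + d / A) by field; apply: lt0r_neq0.
  rewrite powRM; last 2 first.
  - exact: ltW.
  - by apply: addr_ge0 => //; apply: divr_ge0; apply: ltW.
  have h1le : 1 <= 1 + d / A by rewrite lerDl divr_ge0 //; apply: ltW.
  have := ler1_powR (r := beta) h1le; case/andP: hb => _ /ltW b1 /(_ b1) hle.
  apply: le_trans (ler_wpM2l X0 hle) _.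
  by rewrite /X; rewrite le_eqVlt; apply/orP; left; apply/eqP; field; apply: lt0r_neq0.
pose vm' := fun i => if i == 1%N then vm 1%N - d else vm i.
pose vp' := fun j => vp j + e.
exists vm', vp'; split; last first.
  rewrite /objP big_ltn // [X in _ < X - _]big_ltn // /vm' eqxx.
  have -> : \sum_(2 <= i < a.+1) - (if i == 1%N then vm 1%N - d else vm i)
          = \sum_(2 <= i < a.+1) - vm i.
    by apply: eq_big_nat => i /andP [i2 _]; case: i i2 => [|[|i]].
  rewrite /vp' big_split /= sumr_const_nat subn1 /= -mulr_natr.
  have : 0 < e * h1 / C by rewrite divr_gt0 // mulr_gt0.
  rewrite -hd; lra.
have vpge0 : forall j, (1 <= j <= b)%N -> 0 <= vp j.
  move=> j /andP [j1 jb]; rewrite -vp10; apply: (@chain R _ _ hpm) => //.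
split.
- have Em : \sum_(1 <= i < a.+1) hm N Wm i * Uval alpha beta lam (vm' i)
     = hm1 * (- lam * (A + d) `^ beta)
       + \sum_(2 <= i < a.+1) hm N Wm i * Uval alpha beta lam (vm i).
    rewrite big_ltn // /vm' eqxx Uneg; last by rewrite subr_lt0 (lt_trans vm1).
    rewrite opprB [d - _]addrC /A; congr (_ + _).
    by apply: eq_big_nat => i /andP [i2 _]; case: i i2 => [|[|i]].
  have Em0 : \sum_(1 <= i < a.+1) hm N Wm i * Uval alpha beta lam (vm i)
     = hm1 * (- lam * X)
       + \sum_(2 <= i < a.+1) hm N Wm i * Uval alpha beta lam (vm i).
    by rewrite big_ltn // Uneg.
  have Ep : \sum_(1 <= j < b.+1) hp N Wp b j * Uval alpha beta lam (vp' j)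
     >= h1 * (e * M)
       + \sum_(1 <= j < b.+1) hp N Wp b j * Uval alpha beta lam (vp j).
    rewrite big_ltn // [X in _ <= X]big_ltn // /vp' vp10 add0r U0 // mulr0 add0r.
    rewrite Upos; last exact: ltW.
    rewrite he lerD2l; apply: ler_sum_nat => j /andP [j2 jb].
    have j1 : (1 <= j <= b)%N by rewrite (ltnW j2) -ltnS.
    apply: ler_wpM2l; first exact: hpj.
    apply: Umono => //; first exact: vpge0.
    by rewrite lerDl ltW.
  have key : hm1 * lam * (A + d) `^ beta <= hm1 * lam * X + (C - 1) * d.
    have hml : 0 <= hm1 * lam by apply: mulr_ge0; apply: ltW.
    apply: le_trans (ler_wpM2l hml hY) _.
    by rewrite /C addrK; rewrite le_eqVlt; apply/orP; left; apply/eqP; ring.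
  have hCd : C * d = h1 * (e * M) by rewrite /d; field; apply: lt0r_neq0.
  rewrite Em; move: hs; rewrite Em0.
  set S1 := \sum_(2 <= i < a.+1) _.
  set S2 := \sum_(1 <= j < b.+1) hp N Wp b j * Uval alpha beta lam (vp' j).
  move: Ep key; rewrite -/S2.
  set S3 := \sum_(1 <= j < b.+1) _.
  rewrite -hCd.
  have -> : hm1 * (- lam * X) = - (hm1 * lam * X) by ring.
  have -> : hm1 * (- lam * (A + d) `^ beta) = - (hm1 * lam * (A + d) `^ beta) by ring.
  move: d0; lra.
- by move=> _; rewrite /vp' vp10 add0r ltW.
- by move=> j hj; rewrite /vp' lerD2r; apply: hpm.
- move=> i /andP [i1 ia]; rewrite /vm'.
  case: i i1 ia => [|[|i]] // _ ia /=.
    rewrite lerBlDr; apply: le_trans (hmm 1%N _) _; first by rewrite ia.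
    by rewrite lerDl ltW.
  by apply: hmm; rewrite ia.
- move=> _; rewrite /vm'; case: eqP => [_|_]; last exact: hm0.
  by rewrite lerBlDr add0r (le_trans (ltW vm1)) // ltW.
Qed.
End Improve.
Theorem proposition1 (R : realType) (N : nat) (alpha beta lam : R)
    (Wm Wp : R -> R) (nms nps : nat) (Phis : R) :
  0 < alpha < 1 -> 0 < beta < 1 -> 0 < lam ->
  prob_weight Wm -> prob_weight Wp ->
  (nms + nps)%N = N ->
  PhiIs N alpha beta lam Wm Wp nms nps Phis ->
  (forall nm np, (nm + np)%N = N -> PhiLe N alpha beta lam Wm Wp nm np Phis) ->
  0 < Phis ->
  forall wm wp : nat -> R, globalOptP N alpha beta lam Wm Wp nms nps wm wp ->
    (forall i, (1 <= i <= nms)%N -> wm i != 0) /\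
    (forall j, (1 <= j <= nps)%N -> wp j != 0).
Proof.
move=> ha hb hl pWm pWp eN hPhi hLe hP wm wp [hf hopt].
move: hPhi; rewrite /PhiIs; case: ifP => [_ e|hnz [hub hlub]].
  by move: hP; rewrite e ltxx.
have [nm0 np0] : (0 < nms)%N /\ (0 < nps)%N.
  by move/negbT: hnz; rewrite negb_or -!lt0n => /andP.
have hobj : Phis <= objP nms nps wm wp := hlub _ hopt.
have hLe' : forall a b, (0 < a)%N -> (0 < b)%N -> (a + b)%N = N ->
    forall vm vp, feasibleP N alpha beta lam Wm Wp a b vm vp -> objP a b vm vp <= Phis.
  move=> a b a0 b0 e; have := hLe a b e; rewrite /PhiLe ifF //.
  by apply/negbTE; rewrite negb_or -!lt0n a0 b0.
have hf' := hf; case: hf' => [hs hp1 hpm hmm hm0].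
have wm1 : wm 1%N < 0.
  rewrite ltNge; apply/negP => h.
  have s1 : \sum_(1 <= i < nms.+1) (- wm i) <= \sum_(1 <= i < nms.+1) (0:R).
    apply: ler_sum_nat => i /andP [i1 iN]; rewrite oppr_le0.
    by apply: le_trans h _; apply: (@chain R _ _ hmm).
  have s2 : \sum_(1 <= j < nps.+1) (0:R) <= \sum_(1 <= j < nps.+1) wp j.
    apply: ler_sum_nat => j /andP [j1 jN].
    by apply: le_trans (hp1 np0) _; apply: (@chain R _ _ hpm).
  move: s1 s2 hobj hP; rewrite /objP !big1_eq; lra.
split.
- move=> i /andP [i1 iN]; apply/eqP => wi0.
  have wN : wm nms = 0.
    apply/le_anti; rewrite hm0 //= -wi0; exact: (@chain R _ _ hmm).
  case: nms nm0 eN hnz hf hopt hub hlub hobj hs hmm hm0 wN iN => // a _ eN _ hf _ _ _ hobj _ _ _ wN _.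
  case: a eN hf hobj wN => [|a] eN hf hobj wN.
    by move: wm1; rewrite wN ltxx.
  have [hf2 ho2] := @shift_feas R alpha beta lam ha _ _ _ _ _ _ _ hf wN.
  have eN' : (a.+1 + nps.+1)%N = N by rewrite -eN addnS addSn.
  have vp1 : (fun j => if j == 1%N then 0 else wp j.-1) 1%N = 0 :> R by [].
  have [vm' [vp' [hf3 ho3]]] := @improve R alpha beta lam ha hb hl N Wm Wp a.+1 nps.+1 wm _
     pWm pWp (ltn0Sn a) (ltn0Sn nps) eN' hf2 vp1 wm1.
  have := hLe' _ _ (ltn0Sn a) (ltn0Sn nps) eN' _ _ hf3.
  move: ho2 ho3 hobj; lra.
- move=> j /andP [j1 jN]; apply/eqP => wj0.
  have wp1 : wp 1%N = 0.
    by apply/le_anti; rewrite hp1 //= andbT -wj0; exact: (@chain R _ _ hpm).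
  have [vm' [vp' [hf3 ho3]]] := @improve R alpha beta lam ha hb hl N Wm Wp nms nps wm wp
     pWm pWp nm0 np0 eN hf wp1 wm1.
  have := hLe' _ _ nm0 np0 eN _ _ hf3.
  move: ho3 hobj; lra.
Qed.
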